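(* Let $\alpha,\beta$ be $H$-colorings of $G$, $q\in V(G)$, and let $Q\in\pi(H)$ be realizable for $\alpha,\beta,q$. Let $C$ be an $\alpha$-tight closed walk in $G$. Then for every vertex $v$ on $C$ and every walk $W$ in $G$ from $v$ to $q$, $Q=\overline{\alpha(W)}^{-1}\cdot\overline{\beta(W)}$.
   Context: All graphs are finite and undirected. $G$ is a connected loopless graph with at least one edge. $H$ is a connected graph with at least one edge, possibly with loops, having the monochromatic neighborhood property: for all $a,b\in V(H)$, $|N_H(a)\cap N_H(b)|\le 1$, where $N_H(a)=\{w: aw\in E(H)\}$. An $H$-coloring of $G$ is a map $\sigma:V(G)\to V(H)$ such that $uv\in E(G)$ implies $\sigma(u)\sigma(v)\in E(H)$. An $H$-recoloring sequence is a sequence $\sigma_0,\dots,\sigma_l$ of $H$-colorings of $G$ in which consecutive colorings differ in the color of exactly one vertex. Walks: an oriented edge is an ordered pair $(x,y)$ with $xy$ an edge; $(x,y)^{-1}=(y,x)$. A walk from $x$ to $y$ is a sequence of oriented edges, consecutive ones sharing endpoints, starting at $x$ and ending at $y$; $\varepsilon$ is the empty walk; $W^{-1}$ the reversed walk. A walk is reduced if no two consecutive edges $e_ie_{i+1}$ satisfy $e_{i+1}=e_i^{-1}$; $\overline{W}$ is the unique reduced walk obtained by repeatedly deleting such pairs. $A\cdot B:=\overline{AB}$ for reduced $A,B$ with $B$ starting where $A$ ends. $\pi(H)$ is the set of reduced walks in $H$. For a walk $W=(x_0,x_1)\dots(x_{k-1},x_k)$ in $G$, $\alpha(W)=(\alpha(x_0),\alpha(x_1))\dots(\alpha(x_{k-1}),\alpha(x_k))$.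 A nonempty closed walk $e_1\dots e_k$ is cyclically reduced if it is reduced and $e_k\ne e_1^{-1}$; a closed walk $C$ in $G$ is $\alpha$-tight if $\alpha(C)$ is cyclically reduced. Vertex walks: in a one-step sequence $\sigma_0,\sigma_1$ where vertex $w$ changes from $a$ to $b\ne a$, all neighbors of $w$ have a common color $h$ (the unique element of $N_H(a)\cap N_H(b)$); set $S(w)=(a,h)(h,b)$ and $S(v)=\varepsilon$ for $v\ne w$. For the empty sequence $S(v)=\varepsilon$; for longer sequences $S(v)$ is the concatenation of the one-step walks in order. $Q\in\pi(H)$ is realizable for $\alpha,\beta,q$ if there is an $H$-recoloring sequence $S=\sigma_0,\dots,\sigma_l$ with $\sigma_0=\alpha$, $\sigma_l=\beta$, $\overline{S(q)}=Q$. *)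

(* Defs.v *)
From mathcomp Require Import all_boot.
Set Implicit Arguments. Unset Strict Implicit. Unset Printing Implicit Defensive.

(* Graphs: a finite type of vertices with a symmetric edge relation.
   Walks are sequences of oriented edges (ordered pairs). *)

Section Walks.
Variable T : eqType.

Definition einv (e : T * T) : T * T := (e.2, e.1).

Definition winv (W : seq (T * T)) : seq (T * T) := rev (map einv W).

Fixpoint is_walk (e : rel T) (x : T) (W : seq (T * T)) (y : T) : bool :=
  match W with
  | [::] => x == y
  | p :: W' => [&& p.1 == x, e p.1 p.2 & is_walk e p.2 W' y]
  end.

Fixpoint reduced (W : seq (T * T)) : bool :=
  match W with
  | e1 :: ((e2 :: _) as W') => (e2 != einv e1) && reduced W'
  | _ => true
  end.

(* \overline{W}: the reduced walk obtained by cancelling backtracks *)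
Fixpoint red (W : seq (T * T)) : seq (T * T) :=
  match W with
  | [::] => [::]
  | p :: W' =>
      match red W' with
      | q :: R => if q == einv p then R else p :: q :: R
      | [::] => [:: p]
      end
  end.

Definition wdot (A B : seq (T * T)) : seq (T * T) := red (A ++ B).

Definition cyc_reduced (W : seq (T * T)) : bool :=
  match W with
  | [::] => false
  | p :: W' => reduced W && (last p W' != einv p)
  end.

End Walks.

Definition wmap (U V : Type) (f : U -> V) (W : seq (U * U)) : seq (V * V) :=
  map (fun p => (f p.1, f p.2)) W.

Section Colorings.
Variables (VG VH : finType) (eG : rel VG) (eH : rel VH).

Definition simple_graph : Prop := symmetric eG /\ irreflexive eG.
Definition connected_graph (V : finType) (e : rel V) : Prop :=
  forall x y, connect e x y.
Definition has_edge (V : finType) (e : rel V) : Prop := exists x y, e x y.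

Definition mono_nbhd : Prop :=
  forall a b : VH, a != b -> #|[pred w | eH a w && eH b w]| <= 1.

Definition is_Hcoloring (s : VG -> VH) : Prop :=
  forall u v, eG u v -> eH (s u) (s v).

Definition one_step (s0 s1 : VG -> VH) : Prop :=
  exists w, s0 w != s1 w /\ forall v, v != w -> s0 v = s1 v.

Fixpoint recoloring_seq (s0 : VG -> VH) (rest : seq (VG -> VH)) : Prop :=
  match rest with
  | [::] => is_Hcoloring s0
  | s1 :: rest' => is_Hcoloring s0 /\ one_step s0 s1 /\ recoloring_seq s1 rest'
  end.

(* one-step vertex walk: (a,h)(h,b) where h is the (unique) element of
   N_H(a) \cap N_H(b) if v changes from a to b, else the empty walk *)
Definition step_walk (s0 s1 : VG -> VH) (v : VG) : seq (VH * VH) :=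
  if s0 v == s1 v then [::]
  else let h := odflt (s0 v) [pick h | eH (s0 v) h && eH (s1 v) h] in
       [:: (s0 v, h); (h, s1 v)].

Fixpoint vertex_walk (s0 : VG -> VH) (rest : seq (VG -> VH)) (v : VG)
  : seq (VH * VH) :=
  match rest with
  | [::] => [::]
  | s1 :: rest' => step_walk s0 s1 v ++ vertex_walk s1 rest' v
  end.

Definition realizable (Q : seq (VH * VH)) (alpha beta : VG -> VH) (q : VG)
  : Prop :=
  exists rest : seq (VG -> VH),
    [/\ recoloring_seq alpha rest,
        (forall v, last alpha rest v = beta v) &
        red (vertex_walk alpha rest q) = Q].

Definition tight (alpha : VG -> VH) (C : seq (VG * VG)) : bool :=
  cyc_reduced (wmap alpha C).

End Colorings.

Definition in_pi (V : finType) (e : rel V) (Q : seq (V * V)) : Prop :=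
  reduced Q /\ exists x y, is_walk e x Q y.

(* Main.v *)
Require Import Defs.
From mathcomp Require Import all_boot.
Set Implicit Arguments. Unset Strict Implicit. Unset Printing Implicit Defensive.

Section Red.
Variable T : eqType.
Implicit Types (p q : T * T) (A B R W : seq (T * T)).

Definition cons_red p R :=
  match R with
  | q :: R' => if q == einv p then R' else p :: q :: R'
  | [::] => [:: p]
  end.

Lemma red_cons p W : red (p :: W) = cons_red p (red W).
Proof. by []. Qed.

Lemma einvK p : einv (einv p) = p.
Proof. by case: p. Qed.

Lemma reduced_tail p R : reduced (p :: R) -> reduced R.
Proof. by case: R => //= q R /andP[]. Qed.

Lemma reduced_cons_red p R : reduced R -> reduced (cons_red p R).
Proof.
case: R => [|q R] //= H; case: ifP => [_|Hq]; first exact: reduced_tail H.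
by rewrite /= Hq H.
Qed.

Lemma reduced_red W : reduced (red W).
Proof. elim: W => //= p W IH; exact: (reduced_cons_red p IH). Qed.

Lemma red_id R : reduced R -> red R = R.
Proof.
elim: R => // p R IH H; rewrite red_cons IH ?(reduced_tail H) //.
case: R H {IH} => //= q R /andP[Hq _]; by rewrite (negbTE Hq).
Qed.

Lemma red_red W : red (red W) = red W.
Proof. exact/red_id/reduced_red. Qed.

Lemma red_cancel p B : red (p :: einv p :: B) = red B.
Proof.
rewrite !red_cons; have := reduced_red B; case: (red B) => [|q R] /=.
  by rewrite eqxx.
rewrite einvK; case: eqP => [->|_] H; last (simpl; by rewrite eqxx).

case: R H => //= r R /andP[Hr _]; by rewrite (negbTE Hr).
Qed.

Lemma red_catl A B : red (A ++ B) = red (A ++ red B).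
Proof. by elim: A => [|p A IH] /=; [rewrite red_red | rewrite IH]. Qed.

Lemma red_catr A B : red (A ++ B) = red (red A ++ B).
Proof.
elim: A => // p A IH.
rewrite cat_cons red_cons IH (red_cons p A).
case: (red A) => [|q R] //.
rewrite {2}/cons_red; case: ifP => [/eqP->|_] //.
by rewrite -red_cons red_cancel.
Qed.

Lemma red_congr A A' B B' :
  red A = red A' -> red B = red B' -> red (A ++ B) = red (A' ++ B').
Proof.
move=> HA HB; rewrite (red_catr A) (red_catl (red A)) HA HB.
by rewrite -(red_catl (red A')) -(red_catr A').
Qed.

Lemma red_cancel_mid A p B : red (A ++ p :: einv p :: B) = red (A ++ B).
Proof.
apply: red_congr => //; exact: red_cancel.
Qed.

Lemma winv_cons p A : winv (p :: A) = winv A ++ [:: einv p].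
Proof. by rewrite /winv /= rev_cons -cats1. Qed.

Lemma winvK A : winv (winv A) = A.
Proof.
rewrite /winv map_rev revK; elim: A => //= e A ->; by rewrite einvK.
Qed.

Lemma red_inv_r A : red (A ++ winv A) = [::].
Proof.
elim: A => // p A IH.
rewrite winv_cons cat_cons catA red_cons red_catr IH /=.
by rewrite eqxx.
Qed.

Lemma red_inv_l A : red (winv A ++ A) = [::].
Proof. by have := red_inv_r (winv A); rewrite winvK. Qed.

Lemma red_winv_red A : red (winv (red A)) = red (winv A).
Proof.
have E1 : red (winv (red A)) = red (winv (red A) ++ (A ++ winv A)).
  have := @red_congr (winv (red A)) (winv (red A)) [::] (A ++ winv A) erefl.
  by rewrite cats0 red_inv_r => ->.
rewrite E1 catA.
have -> : red ((winv (red A) ++ A) ++ winv A) = red ([::] ++ winv A) => //.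
apply: (@red_congr _ [::]) => //.
rewrite -[RHS](red_inv_l (red A)); apply: red_congr => //.
by rewrite red_red.
Qed.

Lemma reduced_mid (X : seq (T * T)) (a b : T * T) Y : reduced (X ++ a :: b :: Y) -> b != einv a.
Proof.
elim: X => [/andP[]//|x X IH] /=.
case: X IH => [|y X] IH /andP[_ H]; exact: IH.
Qed.

End Red.

Section Graph.
Variables (VG VH : finType) (eG : rel VG) (eH : rel VH).
Hypotheses (HGirr : irreflexive eG) (HHs : symmetric eH) (HHm : mono_nbhd eH).

Lemma uniq_common a b h1 h2 :
  a != b -> eH a h1 -> eH b h1 -> eH a h2 -> eH b h2 -> h1 = h2.
Proof.
move=> ab a1 b1 a2 b2; move/card_le1_eqP: (HHm ab) => H.
have := H h2 h1; rewrite !inE /= a1 b1 a2 b2 => /(_ isT isT); done.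
Qed.

Lemma step_nb s0 s1 w x :
  is_Hcoloring eG eH s0 -> is_Hcoloring eG eH s1 ->
  s0 w != s1 w -> (forall v, v != w -> s0 v = s1 v) ->
  eG x w \/ eG w x ->
  step_walk eH s0 s1 w = [:: (s0 w, s0 x); (s0 x, s1 w)].
Proof.
move=> c0 c1 ne same Hx.
have xw : x != w.
  by apply/eqP => E; subst x; case: Hx; rewrite HGirr.
have e0 : eH (s0 w) (s0 x).
  by case: Hx => /c0 //; rewrite HHs.
have e1 : eH (s1 w) (s0 x).
  by rewrite (same x xw); case: Hx => /c1 //; rewrite HHs.
rewrite /step_walk (negbTE ne); case: pickP => [h /andP[h1 h2] | none].
  by rewrite (uniq_common ne h1 h2 e0 e1).
by have := none (s0 x); rewrite e0 e1.
Qed.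

Lemma homot1 s0 s1 :
  is_Hcoloring eG eH s0 -> is_Hcoloring eG eH s1 -> one_step s0 s1 ->
  forall W x y, is_walk eG x W y ->
  red (wmap s0 W ++ step_walk eH s0 s1 y) = red (step_walk eH s0 s1 x ++ wmap s1 W).
Proof.
move=> c0 c1 [w [ne same]].
have stepE v : v != w -> step_walk eH s0 s1 v = [::].
  by move=> vw; rewrite /step_walk (same v vw) eqxx.
elim=> [|[x' z] W IH] x y.
  by move/eqP->; rewrite cats0.
case/and3P => /eqP Ex exz Hw; simpl in Ex, exz; subst x'.
rewrite [wmap s0 _]/= [wmap s1 _]/=.
have E := red_congr (A:=[:: (s0 x, s0 z)]) erefl (IH _ _ Hw).
rewrite !cat1s in E; rewrite E -cat_cons -cat_rcons; apply: red_congr => //.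
case: (eqVneq x w) => [Exw|xw]; case: (eqVneq z w) => [Ezw|zw].
- by subst; rewrite HGirr in exz.
- subst x; rewrite (stepE z zw) -(same z zw) (step_nb c0 c1 ne same (or_intror exz)).
  exact: esym (red_cancel_mid [:: (s0 w, s0 z)] (s0 z, s1 w) [::]).
- subst z; rewrite (stepE x xw) -(same x xw) (step_nb c0 c1 ne same (or_introl exz)).
  exact: (red_cancel (s0 x, s0 w) [:: (s0 x, s1 w)]).
- by rewrite (stepE x xw) (stepE z zw) -(same x xw) -(same z zw).
Qed.

Lemma rec_col s rest : recoloring_seq eG eH s rest -> is_Hcoloring eG eH s.
Proof. by case: rest => [|s1 rest] //= [] . Qed.

Lemma homot rest s0 W x y :
  recoloring_seq eG eH s0 rest -> is_walk eG x W y ->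
  red (wmap s0 W ++ vertex_walk eH s0 rest y) =
  red (vertex_walk eH s0 rest x ++ wmap (last s0 rest) W).
Proof.
move=> + Hw; elim: rest s0 => [|s1 rest IH] s0 /=.
  by rewrite cats0.
move=> [c0 [st Hr]].
rewrite catA (red_congr (homot1 c0 (rec_col Hr) st Hw) (erefl (red _))).
rewrite -!catA; apply: red_congr => //; exact: IH.
Qed.

Lemma walk_edge x C y p : is_walk eG x C y -> p \in C -> eG p.1 p.2.
Proof.
elim: C x => // q C IH x /= /and3P[_ e Hw]; rewrite inE => /orP[/eqP->//|].
exact: IH Hw.
Qed.

Lemma walk_snd x C y p : is_walk eG x C y -> p \in C ->
  (p.2 \in [seq r.1 | r <- C]) \/ p.2 = y.
Proof.
elim: C x => // q C IH x /= /and3P[_ e Hw]; rewrite inE => /orP[/eqP->|pC].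
  case: C Hw {IH} => [/eqP->|r C /= /and3P[/eqP <- _ _]]; first by right.
  by left; rewrite !inE eqxx orbT.
case: (IH _ Hw pC) => [H|->]; last by right.
by left; rewrite inE H orbT.
Qed.

Lemma closed_snd c C p : is_walk eG c C c -> p \in C -> p.2 \in [seq r.1 | r <- C].
Proof.
move=> Hw pC; case: (walk_snd Hw pC) => // ->.
case: C Hw pC => //= q C /and3P[/eqP <- _ _] _; by rewrite inE eqxx.
Qed.

Lemma walk_mid x X r p Y y : is_walk eG x (X ++ r :: p :: Y) y -> p.1 = r.2.
Proof.
elim: X x => [|q X IH] x /=; last by case/and3P => _ _ /IH.
by case/and3P => _ _ /and3P[/eqP].
Qed.

Lemma walk_last x Y r y : is_walk eG x (rcons Y r) y -> r.2 = y.
Proof.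
elim: Y x => [|q Y IH] x /=; last by case/and3P => _ _ /IH.
by case/and3P => _ _ /eqP.
Qed.

Lemma tight_struct (s0 : VG -> VH) c C w :
  is_walk eG c C c -> tight s0 C -> w \in [seq p.1 | p <- C] ->
  exists r p, [/\ r \in C, p \in C, r.2 = w, p.1 = w &
    (s0 p.1, s0 p.2) != einv (s0 r.1, s0 r.2)].
Proof.
move=> HC Ht /mapP[p pC ->].
have pC' := pC.
case/splitPr: pC HC Ht => X Y.
case/lastP: X => [|X r] /= HC Ht.
- case/lastP: Y HC Ht => [|Y r] HC Ht.
    move: HC => /= /and3P[/eqP E1 e /eqP E2].
    by move: e; rewrite E1 -E2 HGirr.
  exists r, p; split.
  + by rewrite inE mem_rcons inE eqxx orbT.
  + by rewrite inE eqxx.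
  + by case/and3P: HC => /eqP -> _ /walk_last.
  + done.
  + move: Ht; rewrite /tight /wmap /= map_rcons last_rcons => /andP[_].
    apply: contra => /eqP ->; by rewrite /einv.
- rewrite cat_rcons in HC Ht; exists r, p; split.
  + by rewrite mem_cat mem_rcons inE eqxx.
  + by rewrite mem_cat inE eqxx orbT.
  + by rewrite -(walk_mid HC).
  + done.
  + move: Ht; rewrite /tight /wmap map_cat /=.
    case: (map _ X) => [|a l] /= /andP[H _]; first by case/andP: H.
    exact: (reduced_mid (X:=a :: l)) H.
Qed.

Lemma key rest (s0 : VG -> VH) c C :
  recoloring_seq eG eH s0 rest -> is_walk eG c C c -> tight s0 C ->
  forall v, v \in [seq p.1 | p <- C] -> vertex_walk eH s0 rest v = [::].
Proof.
elim: rest s0 => [|s1 rest IH] s0 //= [c0 [[w [ne same]] Hr]] HC Ht.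
have c1 := rec_col Hr.
have wC : w \notin [seq p.1 | p <- C].
  apply/negP => /(tight_struct HC Ht) [r [p [rC pC Er Ep]]].
  apply/negP; rewrite negbK /einv /= Ep -Er; apply/eqP; congr pair.
  have ep := walk_edge HC pC; have er := walk_edge HC rC.
  rewrite Ep in ep; rewrite Er in er.
  have p2w : p.2 != w by apply/eqP => E; rewrite E HGirr in ep.
  have r1w : r.1 != w by apply/eqP => E; rewrite E HGirr in er.
  apply: (uniq_common ne).
  - exact: c0 ep.
  - rewrite (same _ p2w); exact: c1 ep.
  - by rewrite HHs; apply: c0.
  - by rewrite (same _ r1w) HHs; apply: c1.
have nw v : v \in [seq p.1 | p <- C] -> v != w.
  by move=> vC; apply/eqP => E; rewrite -E vC in wC.
have Ht1 : tight s1 C.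
  suff E : wmap s1 C = wmap s0 C by rewrite /tight E.
  rewrite /wmap; apply/eq_in_map => p pC.
  rewrite (same _ (nw _ (map_f _ pC))) (same _ (nw _ (closed_snd HC pC))) //.
move=> v vC; rewrite (IH s1 Hr HC Ht1 v vC) cats0.
by rewrite /step_walk (same _ (nw _ vC)) eqxx.
Qed.

End Graph.

Theorem mainTheorem5 (VG VH : finType) (eG : rel VG) (eH : rel VH)
  (HGs : simple_graph eG) (HGc : connected_graph eG) (HGe : has_edge eG)
  (HHs : symmetric eH) (HHc : connected_graph eH) (HHe : has_edge eH)
  (HHm : mono_nbhd eH)
  (alpha beta : VG -> VH)
  (Ha : is_Hcoloring eG eH alpha) (Hb : is_Hcoloring eG eH beta)
  (q : VG) (Q : seq (VH * VH))
  (HQ : in_pi eH Q)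
  (Hreal : realizable eG eH Q alpha beta q)
  (c : VG) (C : seq (VG * VG))
  (HC : is_walk eG c C c) (Htight : tight alpha C) :
  forall v, v \in [seq p.1 | p <- C] ->
  forall W : seq (VG * VG), is_walk eG v W q ->
    Q = wdot (winv (red (wmap alpha W))) (red (wmap beta W)).
Proof.
move=> v vC W HW.
case: HGs => _ Hirr.
case: Hreal => rest [Hr Hlast HQ'].
have H := homot Hirr HHs HHm Hr HW.
rewrite (key Hirr HHs HHm Hr HC Htight vC) /= in H.
have Eb : wmap (last alpha rest) W = wmap beta W.
  by rewrite /wmap; apply/eq_in_map => p _; rewrite !Hlast.
rewrite Eb in H.
rewrite -HQ' /wdot.
have E1 : red (vertex_walk eH alpha rest q) =
          red (winv (wmap alpha W) ++ (wmap alpha W ++ vertex_walk eH alpha rest q)).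
  rewrite catA.
  have := @red_congr _ (winv (wmap alpha W) ++ wmap alpha W) [::]
    (vertex_walk eH alpha rest q) (vertex_walk eH alpha rest q).
  by rewrite red_inv_l => /(_ erefl erefl).
rewrite E1 (red_congr (erefl (red (winv (wmap alpha W)))) H).
by apply: red_congr; rewrite ?red_winv_red ?red_red.
Qed.
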